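(* Let $n\ge1$, $G\geq1$, let $W$ be an $n\times G$ matrix and $Z$ an $n\times G$ matrix with entries in $\{0,1\}$ such that each row of $W$ has exactly one entry equal to $1$, and $Z_{ig}\le W_{ig}$ for all $i,g$. Let $n_g=\sum_iW_{ig}$ and $m_g=\sum_iZ_{ig}$, and suppose $m_g\geq 2$ and $n_g-m_g\geq2$ for all $g=1,\dots,G$. Let $M_W=I_n-W(W'W)^{-1}W'$, $P=M_WZ(Z'M_WZ)^{-1}Z'M_W$, $V=[Z,W]$ and $M_{Z,W}=I_n-V(V'V)^{-1}V'$. If $D$ is the $n\times n$ diagonal matrix with elements $$D_{ii}=\sum_{g=1}^G\frac{1}{n_g}W_{ig}\left[\frac{n_g-m_g}{m_g-1}Z_{ig}+\frac{m_g}{n_g-m_g-1}(1-Z_{ig})\right],$$ then $P_{ii}=[M_{Z,W}DM_{Z,W}]_{ii}$ for all $i=1,\dots,n$. *)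

(* Defs.v *)
From HB Require Import structures.
From mathcomp Require Import all_boot all_order all_algebra.
Set Implicit Arguments. Unset Strict Implicit. Unset Printing Implicit Defensive.
Import Order.TTheory GRing.Theory Num.Theory.
Local Open Scope ring_scope.

Definition annih (R : realFieldType) (n k : nat) (X : 'M[R]_(n, k)) : 'M[R]_n :=
  1%:M - X *m invmx (X^T *m X) *m X^T.

(* Main.v *)
Require Import Defs.
From HB Require Import structures.
From mathcomp Require Import all_boot all_order all_algebra ring lra.
Import Order.TTheory GRing.Theory Num.Theory.
Local Open Scope ring_scope.

Section Helpers.
Variable R : realFieldType.

Lemma sum_delta (T : finType) (F : T -> R) a : \sum_g (g == a)%:R * F g = F a.
Proof.
rewrite (bigD1 a) //= eqxx mul1r big1 ?addr0 // => g /negbTE ->; by rewrite mul0r.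
Qed.

Lemma inv_eq k (A B : 'M[R]_k) : A *m B = 1%:M -> invmx A = B.
Proof.
move=> h; have [uA _] := mulmx1_unit h.
by rewrite -[invmx A]mulmx1 -h mulmxA mulVmx // mul1mx.
Qed.

Lemma addE k m (A B : 'M[R]_(k, m)) i j : (A + B) i j = A i j + B i j.
Proof. by rewrite mxE. Qed.

Lemma diagE k (d : 'rV[R]_k) i j : diag_mx d i j = (i == j)%:R * d 0 j.
Proof. by rewrite mxE mulr_natl; case: eqVneq => [->|]; rewrite ?mulr0n ?mulr1n. Qed.

Lemma inv_diag k (d : 'rV[R]_k) : (forall j, d 0 j != 0) ->
  invmx (diag_mx d) = diag_mx (\row_j (d 0 j)^-1).
Proof.
move=> h; apply: inv_eq; rewrite mulmx_diag; apply/matrixP => i j.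
rewrite !mxE mulfV //; by case: eqVneq.
Qed.

Lemma annih_sym k m (X : 'M[R]_(k, m)) : (annih X)^T = annih X.
Proof.
by rewrite /annih linearB /= trmx1 !trmx_mul trmxK trmx_inv trmx_mul trmxK mulmxA.
Qed.

Variables (n G : nat) (gi : 'I_n -> 'I_G).

Lemma mulXdYt (X Y : 'M[R]_(n, G)) x y (d : 'rV[R]_G) :
  (forall k g, X k g = (g == gi k)%:R * x k g) ->
  (forall k g, Y k g = (g == gi k)%:R * y k g) ->
  forall i j, (X *m diag_mx d *m Y^T) i j
    = (gi i == gi j)%:R * (x i (gi i) * d 0 (gi i) * y j (gi i)).
Proof.
move=> hX hY i j; rewrite mul_mx_diag !mxE.
under eq_bigr => g _ do rewrite !mxE hX hY.
transitivity (\sum_g (g == gi i)%:R * (x i g * d 0 g * ((g == gi j)%:R * y j g))).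
  by apply: eq_bigr => g _; ring.
by rewrite sum_delta; ring.
Qed.

Lemma trXY (X Y : 'M[R]_(n, G)) x y :
  (forall k g, X k g = (g == gi k)%:R * x k g) ->
  (forall k g, Y k g = (g == gi k)%:R * y k g) ->
  X^T *m Y = diag_mx (\row_g \sum_k (g == gi k)%:R * (x k g * y k g)).
Proof.
move=> hX hY; apply/matrixP => g h; rewrite diagE !mxE.
under eq_bigr => k _ do rewrite !mxE hX hY.
case: (eqVneq g h) => [<-|ne]; rewrite ?mul1r ?mul0r.
  by apply: eq_bigr => k _; case: (g == gi k) => /=; ring.
apply: big1 => k _; case: (eqVneq g (gi k)) => [e|_] /=; last by ring.
by rewrite -e [h == g]eq_sym (negbTE ne) /=; ring.
Qed.

Variable z : 'I_n -> R.
Hypothesis hz : forall k, z k = 0 \/ z k = 1.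

Lemma sum_split (g0 : 'I_G) (phi : R -> R) :
  \sum_k (g0 == gi k)%:R * phi (z k)
  = (\sum_k (g0 == gi k)%:R * z k) * phi 1
    + (\sum_k (g0 == gi k)%:R - \sum_k (g0 == gi k)%:R * z k) * phi 0.
Proof.
rewrite -sumrB !mulr_suml -big_split /=; apply: eq_bigr => k _.
by case: (hz k) => ->; ring.
Qed.

End Helpers.
Arguments trXY {R n G gi X Y} x y.
Arguments mulXdYt {R n G gi X Y} x y d.
Theorem lemma5 (R : realFieldType) (n G : nat)
  (W Z : 'M[R]_(n, G))
  (hn : (0 < n)%N) (hG : (0 < G)%N)
  (hW01 : forall i g, W i g = 0 \/ W i g = 1)
  (hZ01 : forall i g, Z i g = 0 \/ Z i g = 1)
  (hWrow : forall i, exists! g, W i g = 1)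
  (hZW : forall i g, Z i g <= W i g)
  (hm : forall g, 2 <= \sum_i Z i g)
  (hnm : forall g, 2 <= \sum_i W i g - \sum_i Z i g) :
  let ng := fun g => \sum_i W i g in
  let mg := fun g => \sum_i Z i g in
  let MW := annih W in
  let P := MW *m Z *m invmx (Z^T *m MW *m Z) *m Z^T *m MW in
  let V := row_mx Z W in
  let MZW := annih V in
  let D := diag_mx (\row_i \sum_g ((ng g)^-1 * W i g *
              ((ng g - mg g) / (mg g - 1) * Z i g
               + mg g / (ng g - mg g - 1) * (1 - Z i g)))) in
  forall i, P i i = (MZW *m D *m MZW) i i.
Proof.
move=> ng mg MW P V MZW D i.
have /fin_all_exists [gi hgi] : forall k, exists g, W k g = 1 /\ forall g', W k g' = 1 -> g' = g.
  move=> k; have [g [h1 h2]] := hWrow k.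
  by exists g; split => // g' /h2 ->.
have hW k g : W k g = (g == gi k)%:R * 1.
  case: (eqVneq g (gi k)) => [->|ne]; first by rewrite (proj1 (hgi k)) mulr1.
  case: (hW01 k g) => [->|h]; first by rewrite /=; ring.
  by move: ne; rewrite ((proj2 (hgi k)) g h) eqxx.
pose z : 'I_n -> R := fun k => Z k (gi k).
have hz k : z k = 0 \/ z k = 1 by exact: hZ01.
have hZ k g : Z k g = (g == gi k)%:R * z k.
  case: (eqVneq g (gi k)) => [->|ne] /=; first by rewrite mul1r.
  have := hZW k g; rewrite hW (negbTE ne) /= mul0r.
  by case: (hZ01 k g) => ->; [rewrite mul0r | rewrite ler10].
have hng g : ng g = \sum_k (g == gi k)%:R.
  by apply: eq_bigr => k _; rewrite hW mulr1.
have hmg g : mg g = \sum_k (g == gi k)%:R * z k.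
  by apply: eq_bigr => k _; rewrite hZ.
have hm' g : 2 <= mg g := hm g.
have hnm' g : 2 <= ng g - mg g := hnm g.
have nz1 g : mg g != 0 by rewrite gt_eqF //; move: (hm' g); lra.
have nz2 g : ng g - mg g != 0 by rewrite gt_eqF //; move: (hnm' g); lra.
have nz3 g : ng g != 0 by rewrite gt_eqF //; move: (hnm' g) (hm' g); lra.
have nz4 g : mg g - 1 != 0 by rewrite gt_eqF //; move: (hm' g); lra.
have nz5 g : ng g - mg g - 1 != 0 by rewrite gt_eqF //; move: (hnm' g); lra.
have split g0 (phi : R -> R) : \sum_k (g0 == gi k)%:R * phi (z k)
    = mg g0 * phi 1 + (ng g0 - mg g0) * phi 0.
  by rewrite (@sum_split R n G gi z hz) -hng -hmg.
have WtW : W^T *m W = diag_mx (\row_g ng g).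
  rewrite (trXY (fun _ _ => 1) (fun _ _ => 1) hW hW); congr diag_mx.
  by apply/rowP => g; rewrite !mxE hng; apply: eq_bigr => k _; ring.
have MWE : MW = 1%:M - W *m diag_mx (\row_g (ng g)^-1) *m W^T.
  rewrite /MW /annih WtW inv_diag; last by move=> g; rewrite mxE.
  by congr (_ - W *m diag_mx _ *m _); apply/rowP => g; rewrite !mxE.
have MWZE : MW *m Z = Z - W *m diag_mx (\row_g (mg g / ng g)).
  rewrite MWE mulmxBl mul1mx -!mulmxA (trXY (fun _ _ => 1) (fun k _ => z k) hW hZ) mulmx_diag.
  congr (_ - W *m diag_mx _); apply/rowP => g; rewrite !mxE mulrC hmg.
  by congr (_ * _); apply: eq_bigr => k _; ring.
have MWZe k g : (MW *m Z) k g = (g == gi k)%:R * (z k - mg g / ng g).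
  by rewrite MWZE mul_mx_diag !mxE hZ hW; ring.
have ZMZ : Z^T *m MW *m Z = diag_mx (\row_g (mg g * (1 - mg g / ng g))).
  rewrite -mulmxA (trXY (fun k _ => z k) (fun k g => z k - mg g / ng g) hZ MWZe).
  congr diag_mx; apply/rowP => g; rewrite !mxE.
  by move: (split g (fun t => t * (t - mg g / ng g))) => /= ->; ring.
have nza g : mg g * (1 - mg g / ng g) != 0.
  have -> : mg g * (1 - mg g / ng g) = mg g * (ng g - mg g) / ng g by field.
  by rewrite mulf_neq0 ?invr_eq0 // mulf_neq0.
have MWs : MW^T = MW := @annih_sym R n G W.
have Pii : P i i = (z i - mg (gi i) / ng (gi i)) ^+ 2 / (mg (gi i) * (1 - mg (gi i) / ng (gi i))).
  rewrite /P ZMZ inv_diag; last by move=> g; rewrite mxE.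
  have e : Z^T *m MW = (MW *m Z)^T by rewrite trmx_mul MWs.
  rewrite -mulmxA e (mulXdYt _ _ _ MWZe MWZe) eqxx !mxE /=; ring.
have sZZ g : \sum_k (g == gi k)%:R * (z k * z k) = mg g.
  by move: (split g (fun t => t * t)) => /= ->; ring.
have sZ1 g : \sum_k (g == gi k)%:R * (z k * 1) = mg g.
  by move: (split g (fun t => t * 1)) => /= ->; ring.
have s1Z g : \sum_k (g == gi k)%:R * (1 * z k) = mg g.
  by move: (split g (fun t => 1 * t)) => /= ->; ring.
have hV : V^T *m V = block_mx (diag_mx (\row_g mg g)) (diag_mx (\row_g mg g))
                               (diag_mx (\row_g mg g)) (diag_mx (\row_g ng g)).
  rewrite /V tr_row_mx mul_col_row WtW (trXY (fun k _ => z k) (fun k _ => z k) hZ hZ).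
  rewrite (trXY (fun k _ => z k) (fun _ _ => 1) hZ hW) (trXY (fun _ _ => 1) (fun k _ => z k) hW hZ).
  by congr block_mx; congr diag_mx; apply/rowP => g; rewrite !mxE.
pose al := \row_g ((mg g)^-1 + (ng g - mg g)^-1).
pose be := \row_g (- (ng g - mg g)^-1).
pose ga := \row_g ((ng g - mg g)^-1).
have hVinv : invmx (V^T *m V) = block_mx (diag_mx al) (diag_mx be) (diag_mx be) (diag_mx ga).
  apply: inv_eq; rewrite hV mulmx_block !mulmx_diag scalar_mx_block.
  congr block_mx; apply/matrixP => a b; rewrite !mxE; case: eqP => _ /=;
    rewrite ?mulr0n ?mulr1n ?addr0 //; field; by rewrite ?nz1 ?nz2.
pose hh (g : 'I_G) (s t : R) := s * ((mg g)^-1 + (ng g - mg g)^-1) * t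
   - (ng g - mg g)^-1 * t - s * (ng g - mg g)^-1 + (ng g - mg g)^-1.
have He j k : (V *m invmx (V^T *m V) *m V^T) j k = (gi j == gi k)%:R * hh (gi j) (z j) (z k).
  rewrite hVinv {1}/V tr_row_mx mul_row_block mul_row_col !mulmxDl !addE.
  rewrite (mulXdYt (fun k _ => z k) (fun k _ => z k) al hZ hZ).
  rewrite (mulXdYt (fun _ _ => 1) (fun k _ => z k) be hW hZ).
  rewrite (mulXdYt (fun k _ => z k) (fun _ _ => 1) be hZ hW).
  rewrite (mulXdYt (fun _ _ => 1) (fun _ _ => 1) ga hW hW) !mxE /hh; ring.
pose f (g : 'I_G) (t : R) := (ng g)^-1 * ((ng g - mg g) / (mg g - 1) * t
               + mg g / (ng g - mg g - 1) * (1 - t)).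
rewrite Pii /MZW /annih /D.
set d := (\row_i \sum_g _ : 'rV[R]_n).
have De k : d 0 k = f (gi k) (z k).
  rewrite /d mxE; under eq_bigr => g _ do rewrite hW hZ.
  transitivity (\sum_g (g == gi k)%:R * f g (z k)); last by rewrite sum_delta.
  by apply: eq_bigr => g _; case: (g == gi k) => /=; rewrite /f; ring.
set H := V *m _ *m _.
have He' j k : H j k = (gi j == gi k)%:R * hh (gi j) (z j) (z k) by exact: He.
clearbody H d.
rewrite mulmxBl mul1mx mulmxBr mulmx1 mulmxBl mul_mx_diag mul_diag_mx.
rewrite !mxE eqxx mulr1n.
under eq_bigr => k _ do rewrite mxE.
pose phi t := hh (gi i) (z i) t * f (gi i) t * hh (gi i) t (z i).
rewrite (eq_bigr (fun k => (gi i == gi k)%:R * phi (z k))); last first.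
  move=> k _; rewrite !He' De /phi.
  case: (eqVneq (gi i) (gi k)) => [e|ne]; first by rewrite -e /=; ring.
  by rewrite /=; ring.
rewrite (split (gi i) phi) !He' De /phi /hh /f /= eqxx /=.
have := nz1 (gi i); have := nz2 (gi i); have := nz3 (gi i); have := nz4 (gi i); have := nz5 (gi i).
by case: (hz i) => ->; move=> *; field; rewrite ?nz1 ?nz2 ?nz3 ?nz4 ?nz5.
Qed.
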